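(* Let $\mathcal{C}_{h,\theta}$ be a hyperbolic cone with $\theta<\pi$. There exist $d>0$ and a cone neighbourhood $U_d$ of the cone-point with the following property: if $x,y$ are two points of $\mathcal{C}_{h,\theta}$ at distance $d$ from the cone-point, then the geodesic joining $x$ and $y$ does not intersect $U_d$.
   Context: For $\theta\in(0,2\pi)$ and $h>0$, let $\mathcal{S}_{h,\theta}=\{z\in\mathbb{D}: d_{\mathbb{D}}(0,z)\le h,\ 0\le\arg z\le\theta\}$ in the Poincaré disk. The hyperbolic cone $\mathcal{C}_{h,\theta}$ with cone-angle $\theta$ and slant height $h$ is the quotient of $\mathcal{S}_{h,\theta}$ obtained by gluing the segments $\arg z=0$ and $\arg z=\theta$ via $z\mapsto e^{i\theta}z$; the image of $0$ is the cone-point. A cone neighbourhood of the cone-point is a set of points at distance less than some $r>0$ from it. *)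

(* Defs.v *)
From Stdlib Require Import Reals List.
From Coquelicot Require Import Coquelicot.
Open Scope R_scope.

(* Points of the Poincare disk are represented as pairs (a,b) <-> a + i b. *)
Definition pt := (R * R)%type.

Definition origin : pt := (0, 0).

(* Hyperbolic distance in the Poincare disk:
   d(z,w) = 2 artanh ( |z - w| / |1 - conj(z) w| ). *)
Definition dH (z w : pt) : R :=
  let (a, b) := z in let (c, d) := w in
  let t := sqrt (((a - c)^2 + (b - d)^2) /
                 ((1 - (a*c + b*d))^2 + (a*d - b*c)^2)) in
  ln ((1 + t) / (1 - t)).

Definition in_disk (z : pt) : Prop := (fst z)^2 + (snd z)^2 < 1.

(* The sector S_{h,theta} = {z in D : d_D(0,z) <= h, 0 <= arg z <= theta}
   (the origin, whose argument is undefined, is included). *)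
Definition in_sector (theta h : R) (z : pt) : Prop :=
  in_disk z /\ dH origin z <= h /\
  exists rho phi, 0 <= rho /\ 0 <= phi <= theta /\
    z = (rho * cos phi, rho * sin phi).

Definition rot (theta : R) (z : pt) : pt :=
  (cos theta * fst z - sin theta * snd z, sin theta * fst z + cos theta * snd z).

Definition on_ray0 (z : pt) : Prop := snd z = 0 /\ 0 <= fst z.

Definition glue (theta : R) (z w : pt) : Prop :=
  z = w \/ (on_ray0 z /\ w = rot theta z) \/ (on_ray0 w /\ z = rot theta w).

(* A chain from x to y : x ~ p0, [p0,q0], q0 ~ p1, [p1,q1], ..., qn ~ y *)
Fixpoint is_chain (theta h : R) (x y : pt) (l : list (pt * pt)) : Prop :=
  match l with
  | nil => glue theta x y
  | (p, q) :: l' =>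
      glue theta x p /\ in_sector theta h p /\ in_sector theta h q /\
      is_chain theta h q y l'
  end.

Fixpoint chain_length (l : list (pt * pt)) : R :=
  match l with
  | nil => 0
  | (p, q) :: l' => dH p q + chain_length l'
  end.

(* Quotient (pseudo)metric of the gluing: infimum of lengths of chains.
   Points of the cone C_{h,theta} are the classes of sector points under
   dcone = 0; the cone point is the class of the origin. *)
Definition dcone (theta h : R) (x y : pt) : R :=
  real (Glb_Rbar (fun L => exists l, is_chain theta h x y l /\ L = chain_length l)).

(* A (minimizing) geodesic in the cone from x to y, parametrized by arc
   length on [0, dcone x y], given through sector representatives. *)
Definition is_geodesic (theta h : R) (g : R -> pt) (x y : pt) : Prop :=
  let L := dcone theta h x y in
  (forall t, 0 <= t <= L -> in_sector theta h (g t)) /\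
  dcone theta h (g 0) x = 0 /\ dcone theta h (g L) y = 0 /\
  (forall s t, 0 <= s <= L -> 0 <= t <= L ->
     dcone theta h (g s) (g t) = Rabs (s - t)).

(* Main.v *)
Require Import Defs.
From Stdlib Require Import Reals List Lra Psatz.
From Coquelicot Require Import Coquelicot.
Open Scope R_scope.

Definition phi (v : R) := (1 + v) / (1 - v).
Definition nrm (z : pt) := sqrt (fst z ^ 2 + snd z ^ 2).
Definition F (z : pt) := dH origin z.

Lemma div_le (a b c d : R) : 0 < b -> 0 < d -> a * d <= c * b -> a / b <= c / d.
Proof.
  intros Hb Hd H. apply (Rmult_le_reg_r (b*d)); [nra|].
  replace (a/b*(b*d)) with (a*d) by (field; lra).
  replace (c/d*(b*d)) with (c*b) by (field; lra). exact H.
Qed.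

Lemma div_lt (a b c d : R) : 0 < b -> 0 < d -> a * d < c * b -> a / b < c / d.
Proof.
  intros Hb Hd H. apply (Rmult_lt_reg_r (b*d)); [nra|].
  replace (a/b*(b*d)) with (a*d) by (field; lra).
  replace (c/d*(b*d)) with (c*b) by (field; lra). exact H.
Qed.

Lemma phi_pos v : 0 <= v < 1 -> 0 < phi v.
Proof. intros. unfold phi. apply Rdiv_lt_0_compat; lra. Qed.

Lemma phi_le v w : 0 <= v -> v <= w -> w < 1 -> phi v <= phi w.
Proof. intros. unfold phi. apply div_le; nra. Qed.

Lemma dH_origin z : F z = ln (phi (nrm z)).
Proof.
  destruct z as [c e]. unfold F, dH, origin, phi, nrm; simpl.
  replace (((0 - c) * ((0 - c) * 1) + (0 - e) * ((0 - e) * 1)) /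
     ((1 - (0 * c + 0 * e)) * ((1 - (0 * c + 0 * e)) * 1) +
      (0 * e - 0 * c) * ((0 * e - 0 * c) * 1))) with (c * (c * 1) + e * (e * 1)) by (field).
  reflexivity.
Qed.

Lemma dH_eq a b c e : dH (a,b) (c,e) =
  ln (phi (sqrt (((a - c)^2 + (b - e)^2) / ((1 - (a*c + b*e))^2 + (a*e - b*c)^2)))).
Proof. reflexivity. Qed.

Lemma dH_sym p q : dH p q = dH q p.
Proof.
  destruct p as [a b], q as [c e]. rewrite !dH_eq.
  replace ((c - a)^2 + (e - b)^2) with ((a - c)^2 + (b - e)^2) by ring.
  replace ((1 - (c*a + e*b))^2 + (c*b - e*a)^2) with ((1 - (a*c + b*e))^2 + (a*e - b*c)^2) by ring.
  reflexivity.
Qed.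

Lemma nrm_facts z : 0 <= nrm z /\ nrm z ^ 2 = fst z ^ 2 + snd z ^ 2.
Proof.
  unfold nrm. split. apply sqrt_pos. rewrite pow2_sqrt; [reflexivity| nra].
Qed.

Lemma seg (p q : pt) : in_disk p -> in_disk q -> F q <= F p + dH p q.
Proof.
  destruct p as [a b], q as [c e]. unfold in_disk. intros Hp Hq. cbn [fst snd] in Hp, Hq.
  rewrite dH_eq, !dH_origin.
  destruct (nrm_facts (a,b)) as [Hu0 Hu2]. destruct (nrm_facts (c,e)) as [Hs0 Hs2].
  cbn [fst snd] in Hu2, Hs2. set (u := nrm (a,b)) in *. set (s := nrm (c,e)) in *.
  set (XX := (a - c)^2 + (b - e)^2). set (YY := (1 - (a*c + b*e))^2 + (a*e - b*c)^2).
  assert (HY : YY = XX + (1 - u^2)*(1 - s^2)) by (unfold XX, YY; rewrite Hu2, Hs2; ring).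
  assert (Hu1 : u < 1) by nra. assert (Hs1 : s < 1) by nra.
  assert (HX0 : 0 <= XX) by (unfold XX; apply Rplus_le_le_0_compat; apply pow2_ge_0).
  assert (HYp : 0 < YY) by (rewrite HY; nra).
  set (dl := sqrt (XX / YY)).
  assert (Hd0 : 0 <= dl) by apply sqrt_pos.
  assert (Hd2 : dl ^ 2 = XX / YY) by (unfold dl; rewrite pow2_sqrt; [reflexivity|];
     apply Rdiv_le_0_compat; lra).
  assert (Hd2' : dl^2 * YY = XX) by (rewrite Hd2; field; lra).
  assert (Hd1 : dl < 1).
  { destruct (Rlt_or_le dl 1) as [H|H]; auto. exfalso.
    assert (1 <= dl^2) by nra. assert (YY <= dl^2 * YY) by nra.
    assert (0 < (1 - u^2)*(1 - s^2)) by nra. lra. }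
  assert (Hcs : (s - u)^2 <= XX).
  { assert (Hsu : (s*u)^2 = (c^2+e^2)*(a^2+b^2)) by (rewrite <- Hs2, <- Hu2; ring).
    assert (a*c + b*e <= s*u).
    { destruct (Rle_or_lt (a*c+b*e) 0). nra.
      assert ((a*c+b*e)^2 <= (s*u)^2).
      { rewrite Hsu. assert (0 <= (a*e-b*c)^2) by apply pow2_ge_0.
        replace ((c ^ 2 + e ^ 2) * (a ^ 2 + b ^ 2)) with ((a*c+b*e)^2 + (a*e-b*c)^2) by ring. lra. }
      assert (0 <= s*u) by nra.
      destruct (Rle_or_lt (a*c+b*e) (s*u)) as [Hh|Hh]; auto. exfalso.
      assert ((s*u)*(s*u) < (a*c+b*e)*(a*c+b*e)) by (apply Rmult_le_0_lt_compat; lra). nra. }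
    unfold XX. nra. }
  assert (Hkey : s - u <= dl * (1 - s*u)).
  { assert (Hsu1 : s*u <= s) by (rewrite <- (Rmult_1_r s) at 2; apply Rmult_le_compat_l; lra).
    assert (Hp1 : 0 <= dl * (1 - s*u)) by (apply Rmult_le_pos; lra).
    destruct (Rle_or_lt s u). lra.
    destruct (Rle_or_lt (s - u) (dl * (1 - s*u))) as [H1|H1]; auto. exfalso.
    assert (Hsq : (dl * (1 - s*u))^2 < (s-u)^2).
    { simpl. rewrite !Rmult_1_r. apply Rmult_le_0_lt_compat; lra. }
    assert (H2 : (dl*(1-s*u))^2 * YY < (s-u)^2 * YY) by (apply Rmult_lt_compat_r; lra).
    replace ((dl*(1-s*u))^2 * YY) with (XX * (1-s*u)^2) in H2
      by (rewrite <- Hd2'; ring).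
    rewrite HY in H2.
    assert ((1-s*u)^2 = (s-u)^2 + (1-u^2)*(1-s^2)) by ring.
    assert (0 < (1-u^2)*(1-s^2)) by nra.
    nra. }
  rewrite <- ln_mult by (apply phi_pos; lra).
  apply ln_le. apply phi_pos; lra.
  unfold phi. replace ((1 + u) / (1 - u) * ((1 + dl) / (1 - dl))) with
    (((1+u)*(1+dl)) / ((1-u)*(1-dl))) by (field; lra).
  apply div_le; nra.
Qed.

Lemma nrm_rot th z : nrm (rot th z) = nrm z.
Proof.
  destruct z as [a b]. unfold nrm, rot; cbn [fst snd]. f_equal.
  pose proof (sin2_cos2 th) as H. unfold Rsqr in H.
  replace ((cos th * a - sin th * b) ^ 2 + (sin th * a + cos th * b) ^ 2)
    with ((sin th * sin th + cos th * cos th) * (a^2 + b^2)) by ring.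
  rewrite H. ring.
Qed.

Lemma F_glue th z w : glue th z w -> F z = F w.
Proof.
  intros [H|[[_ H]|[_ H]]]; subst; rewrite ?dH_origin, ?nrm_rot; reflexivity.
Qed.

Lemma sector_disk th h z : in_sector th h z -> in_disk z.
Proof. intros [H _]; exact H. Qed.

Lemma chain_bound th h : forall l x y, is_chain th h x y l ->
  Rabs (F y - F x) <= chain_length l.
Proof.
  induction l as [|[p q] l IH]; intros x y Hc; simpl in *.
  - rewrite (F_glue _ _ _ Hc). rewrite Rminus_diag, Rabs_R0. lra.
  - destruct Hc as [Hxp [Hp [Hq Hr]]].
    specialize (IH _ _ Hr). rewrite (F_glue _ _ _ Hxp).
    pose proof (seg p q (sector_disk _ _ _ Hp) (sector_disk _ _ _ Hq)).
    pose proof (seg q p (sector_disk _ _ _ Hq) (sector_disk _ _ _ Hp)).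
    rewrite (dH_sym q p) in H0.
    revert IH. unfold Rabs. repeat destruct Rcase_abs; lra.
Qed.

Lemma glb_bounds (E : R -> Prop) (m v : R) : E v -> (forall w, E w -> m <= w) ->
  m <= real (Glb_Rbar E) <= v.
Proof.
  intros Hv Hm. destruct (Glb_Rbar_correct E) as [Hlb Hglb].
  assert (H1 := Hlb v Hv).
  assert (H2 : Rbar_le m (Glb_Rbar E)) by (apply Hglb; intros w Hw; simpl; apply Hm; exact Hw).
  destruct (Glb_Rbar E) as [g| |]; simpl in *; try contradiction. lra.
Qed.

Lemma F_origin : F origin = 0.
Proof.
  rewrite dH_origin. unfold nrm, origin, phi; simpl.
  replace (0 * (0 * 1) + 0 * (0 * 1)) with 0 by ring. rewrite sqrt_0.
  replace ((1+0)/(1-0)) with 1 by field. apply ln_1.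
Qed.

Lemma origin_sector th h : 0 <= th -> 0 < h -> in_sector th h origin.
Proof.
  intros. split; [|split].
  - unfold in_disk, origin; simpl; lra.
  - change (F origin <= h). rewrite F_origin. lra.
  - exists 0, 0. split; [lra|split; [lra|]]. unfold origin. f_equal; ring.
Qed.

Lemma dcone_bounds th h z w : in_sector th h z -> in_sector th h w ->
  Rabs (F w - F z) <= dcone th h z w <= dH z w.
Proof.
  intros Hz Hw. unfold dcone.
  apply glb_bounds.
  - exists ((z, w) :: nil). split.
    + simpl. split; [left; reflexivity|]. split; [exact Hz|]. split; [exact Hw|]. left; reflexivity.
    + simpl. ring.
  - intros L [l [Hl ->]]. eapply chain_bound; eauto.
Qed.

Lemma cs1 a : cos a ^ 2 + sin a ^ 2 = 1.
Proof. pose proof (sin2_cos2 a) as H. unfold Rsqr in H. simpl. lra. Qed.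

Lemma angle_bound th p1 p2 : 0 <= p1 <= th -> 0 <= p2 <= th -> th < PI ->
  cos th <= cos (p1 - p2).
Proof.
  intros H1 H2 Hp.
  assert (forall a, 0 <= a <= th -> cos th <= cos a).
  { intros a Ha. destruct (Rle_lt_or_eq_dec a th (proj2 Ha)) as [Hl|He].
    - left. apply cos_decreasing_1; lra.
    - subst; lra. }
  destruct (Rle_or_lt p2 p1).
  - apply H; lra.
  - replace (p1 - p2) with (- (p2 - p1)) by ring. rewrite cos_neg. apply H; lra.
Qed.

Lemma sector_param th h x rho : in_sector th h x -> 0 < rho < 1 ->
  F x = ln (phi rho) ->
  exists p, 0 <= p <= th /\ x = (rho * cos p, rho * sin p).
Proof.
  intros [Hd [_ [r1 [p [Hr1 [Hp ->]]]]]] Hr HF.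
  exists p. split; [exact Hp|].
  unfold in_disk in Hd; cbn [fst snd] in Hd.
  assert (E1 : (r1 * cos p) ^ 2 + (r1 * sin p) ^ 2 = r1 ^ 2).
  { replace ((r1 * cos p) ^ 2 + (r1 * sin p) ^ 2) with (r1^2 * (cos p ^ 2 + sin p ^ 2)) by ring.
    rewrite cs1. ring. }
  rewrite E1 in Hd.
  assert (Hr1' : r1 < 1) by nra.
  rewrite dH_origin in HF. unfold nrm in HF; cbn [fst snd] in HF.
  rewrite E1, sqrt_pow2 in HF by lra.
  apply ln_inv in HF; try (apply phi_pos; lra).
  unfold phi in HF.
  assert (E2 : (1 + r1) * (1 - rho) = (1 + rho) * (1 - r1)).
  { replace (1 + r1) with ((1 + r1) / (1 - r1) * (1 - r1)) by (field; lra).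
    rewrite HF. field. lra. }
  assert (r1 = rho) by nra. subst. reflexivity.
Qed.

Lemma dist_bound rho p1 p2 c0 : 0 < rho < 1 -> c0 <= cos (p1 - p2) ->
  dH (rho * cos p1, rho * sin p1) (rho * cos p2, rho * sin p2) <=
  ln (phi (sqrt ((2 * rho^2 * (1 - c0)) / (2 * rho^2 * (1 - c0) + (1 - rho^2)^2)))).
Proof.
  intros Hr Hc. rewrite dH_eq.
  set (c1 := cos p1). set (s1 := sin p1). set (c2 := cos p2). set (s2 := sin p2).
  rewrite cos_minus in Hc. fold c1 c2 s1 s2 in Hc.
  assert (N1 : c1^2 + s1^2 = 1) by apply cs1.
  assert (N2 : c2^2 + s2^2 = 1) by apply cs1.
  set (XX := (rho * c1 - rho * c2) ^ 2 + (rho * s1 - rho * s2) ^ 2).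
  set (YY := (1 - (rho * c1 * (rho * c2) + rho * s1 * (rho * s2))) ^ 2 +
      (rho * c1 * (rho * s2) - rho * s1 * (rho * c2)) ^ 2).
  set (K := (1 - rho^2)^2).
  set (X0 := 2 * rho^2 * (1 - c0)).
  assert (HX : XX = rho^2 * (c1^2+s1^2) + rho^2*(c2^2+s2^2) - 2 * rho^2 * (c1*c2+s1*s2))
    by (unfold XX; ring).
  rewrite N1, N2 in HX.
  assert (HY : YY = XX + (1 - rho^2*(c1^2+s1^2)) * (1 - rho^2*(c2^2+s2^2)))
    by (unfold YY, XX; ring).
  rewrite N1, N2 in HY. fold K in HY. replace ((1 - rho ^ 2 * 1) * (1 - rho ^ 2 * 1)) with K in HY
    by (unfold K; ring).
  assert (HK1 : 0 < 1 - rho^2) by nra.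
  assert (HK : 0 < K) by (unfold K; apply pow_lt; lra).
  assert (HXX0 : 0 <= XX) by (unfold XX; apply Rplus_le_le_0_compat; apply pow2_ge_0).
  assert (HXle : XX <= X0) by (rewrite HX; unfold X0; nra).
  assert (HX00 : 0 <= X0) by lra.
  assert (Hq : XX / YY <= X0 / (X0 + K)).
  { rewrite HY. apply div_le; try lra. nra. }
  assert (Hd1 : sqrt (X0 / (X0 + K)) < 1).
  { rewrite <- sqrt_1. apply sqrt_lt_1_alt. split.
    apply Rdiv_le_0_compat; lra.
    apply (Rmult_lt_reg_r (X0 + K)); [lra|]. unfold Rdiv. rewrite Rmult_assoc, Rinv_l by lra. lra. }
  apply ln_le. apply phi_pos. split; [apply sqrt_pos|].
  eapply Rle_lt_trans; [apply sqrt_le_1_alt; exact Hq| exact Hd1].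
  apply phi_le. apply sqrt_pos. apply sqrt_le_1_alt; exact Hq. exact Hd1.
Qed.

Theorem lemma2p8 (h theta : R) (hh : 0 < h) (htheta0 : 0 < theta)
  (htheta : theta < PI) :
  exists d, 0 < d /\ d < h /\
  exists r, 0 < r /\
  forall x y : pt,
    in_sector theta h x -> in_sector theta h y ->
    dcone theta h origin x = d -> dcone theta h origin y = d ->
    forall g : R -> pt, is_geodesic theta h g x y ->
    forall t, 0 <= t <= dcone theta h x y ->
      r <= dcone theta h origin (g t).
Proof.
  set (E := exp (h/2)).
  assert (HE : 1 < E) by (unfold E; rewrite <- exp_0; apply exp_increasing; lra).
  set (rho := (E - 1) / (E + 1)).
  assert (Hr0 : 0 < rho) by (unfold rho; apply Rdiv_lt_0_compat; lra).
  assert (Hr1 : rho < 1) by (unfold rho; apply (Rmult_lt_reg_r (E+1)); [lra|];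
    unfold Rdiv; rewrite Rmult_assoc, Rinv_l by lra; lra).
  assert (Hphi : phi rho = E) by (unfold phi, rho; field; lra).
  set (d := h / 2).
  assert (Hd : d = ln (phi rho)) by (rewrite Hphi; unfold E, d; rewrite ln_exp; reflexivity).
  set (c0 := cos theta).
  assert (Hc0 : -1 < c0) by (unfold c0; rewrite <- cos_PI; apply cos_decreasing_1; lra).
  set (K := (1 - rho^2)^2).
  set (X0 := 2 * rho^2 * (1 - c0)).
  set (dl := sqrt (X0 / (X0 + K))).
  assert (HK1 : 0 < 1 - rho^2) by nra.
  assert (HK : 0 < K) by (unfold K; apply pow_lt; lra).
  assert (Hc1 : c0 < 1) by (unfold c0; rewrite <- cos_0; apply cos_decreasing_1; lra).
  assert (Hrr : 0 < rho^2) by (apply pow_lt; lra).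
  assert (HX0 : 0 < X0) by (unfold X0; nra).
  assert (HX4 : X0 < 4 * rho^2) by (unfold X0; nra).
  assert (Hdl0 : 0 <= dl) by apply sqrt_pos.
  set (B := 2 * rho / (1 + rho^2)).
  assert (HdlB : dl < B).
  { unfold dl. rewrite <- (sqrt_pow2 B) by (unfold B; apply Rlt_le, Rdiv_lt_0_compat; nra).
    apply sqrt_lt_1_alt. split. apply Rdiv_le_0_compat; lra.
    replace (B^2) with ((4 * rho^2) / ((1 + rho^2)^2)) by (unfold B; field; nra).
    apply div_lt; try lra. nra.
    assert ((1 + rho^2)^2 = 4 * rho^2 + K) by (unfold K; ring).
    rewrite H. nra. }
  assert (HdlB' : dl * (1 + rho^2) < 2 * rho).
  { replace (2 * rho) with (B * (1 + rho^2)) by (unfold B; field; nra). nra. }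
  assert (Hdl1 : dl < 1) by nra.
  set (D := ln (phi dl)).
  assert (HD : D < 2 * d).
  { rewrite Hd. unfold D.
    replace (2 * ln (phi rho)) with (ln (phi rho) + ln (phi rho)) by ring.
    rewrite <- ln_mult by (apply phi_pos; lra).
    apply ln_increasing. apply phi_pos; lra.
    replace (phi rho * phi rho) with ((1+rho)^2/(1-rho)^2) by (unfold phi; field; lra).
    unfold phi. apply div_lt; try nra. }
  exists d. split; [unfold d; lra|]. split; [unfold d; lra|].
  exists (d - D / 2). split; [lra|].
  intros x y Hx Hy Hdx Hdy g Hg t Ht.
  assert (Ho : in_sector theta h origin) by (apply origin_sector; lra).
  assert (HFx : F x = d).
  { destruct (dcone_bounds _ _ _ _ Ho Hx) as [A1 A2]. rewrite Hdx in A1, A2.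
    rewrite F_origin in A1. change (dH origin x) with (F x) in A2.
    revert A1. unfold Rabs. destruct Rcase_abs; lra. }
  assert (HFy : F y = d).
  { destruct (dcone_bounds _ _ _ _ Ho Hy) as [A1 A2]. rewrite Hdy in A1, A2.
    rewrite F_origin in A1. change (dH origin y) with (F y) in A2.
    revert A1. unfold Rabs. destruct Rcase_abs; lra. }
  rewrite Hd in HFx, HFy.
  destruct (sector_param _ _ _ _ Hx (conj Hr0 Hr1) HFx) as [p1 [Hp1 Ex]].
  destruct (sector_param _ _ _ _ Hy (conj Hr0 Hr1) HFy) as [p2 [Hp2 Ey]].
  rewrite <- Hd in HFx, HFy.
  assert (Hxy : dH x y <= D).
  { rewrite Ex, Ey. unfold D, dl, X0, K.
    apply dist_bound; [lra|]. apply angle_bound; lra. }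
  destruct Hg as [Hsec [H0 [HL Hiso]]].
  set (L := dcone theta h x y) in *.
  destruct (dcone_bounds _ _ _ _ Hx Hy) as [_ HLe]. fold L in HLe.
  assert (HL0 : 0 <= L) by lra.
  assert (S0 : in_sector theta h (g 0)) by (apply Hsec; lra).
  assert (SL : in_sector theta h (g L)) by (apply Hsec; lra).
  assert (St : in_sector theta h (g t)) by (apply Hsec; lra).
  assert (F0 : F (g 0) = d).
  { destruct (dcone_bounds _ _ _ _ S0 Hx) as [A1 _]. rewrite H0 in A1.
    revert A1. unfold Rabs. destruct Rcase_abs; lra. }
  assert (FL : F (g L) = d).
  { destruct (dcone_bounds _ _ _ _ SL Hy) as [A1 _]. rewrite HL in A1.
    revert A1. unfold Rabs. destruct Rcase_abs; lra. }
  assert (T0 : Rabs (F (g 0) - F (g t)) <= t).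
  { destruct (dcone_bounds _ _ _ _ St S0) as [A1 _]. rewrite Hiso in A1 by lra.
    rewrite Rminus_0_r, (Rabs_right t) in A1 by lra. exact A1. }
  assert (TL : Rabs (F (g L) - F (g t)) <= L - t).
  { destruct (dcone_bounds _ _ _ _ St SL) as [A1 _]. rewrite Hiso in A1 by lra.
    rewrite (Rabs_left1 (t - L)) in A1 by lra. lra. }
  destruct (dcone_bounds _ _ _ _ Ho St) as [A1 _]. rewrite F_origin in A1.
  revert T0 TL A1. rewrite F0, FL. unfold Rabs. repeat destruct Rcase_abs; lra.
Qed.

Print Assumptions lemma2p8.
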